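(* If $p=p(n)\to0$ and $np\to\infty$ as $n\to\infty$, then a.a.s. $\Gamma\in G(n,p)$ has no domination diamonds.
   Context: $G(n,p)$ is the Erdős–Rényi random graph on $n$ vertices with each edge present independently with probability $p$; a.a.s. means with probability tending to $1$. For distinct vertices $x,y$, $x>y$ means every neighbour of $y$ is adjacent to or equal to $x$. A domination diamond is a quadruple $(a,b,c,d)$ of distinct vertices with $a\sim b\sim c\sim d\sim a$, $a\not\sim c$, $b\not\sim d$, and $a>c$. *)

(* Defs.v *)
From HB Require Import structures.
From mathcomp Require Import all_boot all_order all_algebra.
From mathcomp Require Import all_classical all_reals.
From mathcomp Require Import topology normedtype sequences.
Set Implicit Arguments. Unset Strict Implicit. Unset Printing Implicit Defensive.
Import Order.TTheory GRing.Theory Num.Theory.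
Local Open Scope ring_scope.

(* A graph on vertex set 'I_n is encoded by a set E of ordered pairs; in the
   Erdos-Renyi model only "upper" sets (pairs (i,j) with i < j) get positive
   weight, each such pair encoding the undirected edge {i,j}. *)
Definition upper n (E : {set 'I_n * 'I_n}) : bool :=
  [forall pr in E, (pr.1 < pr.2)%N].

Definition adj n (E : {set 'I_n * 'I_n}) (x y : 'I_n) : bool :=
  (x != y) && (((x, y) \in E) || ((y, x) \in E)).

Definition dominates n (E : {set 'I_n * 'I_n}) (x y : 'I_n) : bool :=
  [forall z, adj E y z ==> (adj E x z || (z == x))].

Definition is_domination_diamond n (E : {set 'I_n * 'I_n}) (a b c d : 'I_n) : bool :=
  [&& uniq [:: a; b; c; d],
      adj E a b, adj E b c, adj E c d, adj E d a,
      ~~ adj E a c, ~~ adj E b d & dominates E a c].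

Definition has_domination_diamond n (E : {set 'I_n * 'I_n}) : bool :=
  [exists a, exists b, exists c, exists d, is_domination_diamond E a b c d].

Definition gnp_weight {R : realType} n (p : R) (E : {set 'I_n * 'I_n}) : R :=
  if upper E then
    \prod_(pr : 'I_n * 'I_n | (pr.1 < pr.2)%N) (if pr \in E then p else 1 - p)
  else 0.

Definition gnp_prob {R : realType} n (p : R) (A : pred {set 'I_n * 'I_n}) : R :=
  \sum_(E : {set 'I_n * 'I_n} | A E) gnp_weight p E.

(* Main.v *)
Require Import Defs.
From HB Require Import structures.
From mathcomp Require Import all_boot all_order all_algebra.
From mathcomp Require Import all_classical all_reals.
From mathcomp Require Import topology normedtype sequences exp.
From mathcomp Require Import ring lra zify.
Import Order.TTheory GRing.Theory Num.Theory numFieldNormedType.Exports.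
Local Open Scope ring_scope.

Section Prod.
Variables (R : realFieldType) (T : finType) (q : R).
Implicit Types (U E : {set T}).

Definition wt U E : R := \prod_(u in U) (if u \in E then q else 1 - q).
Definition Pr U (G : {set T} -> R) : R := \sum_(E in powerset U) wt U E * G E.

Lemma disjP (A B : {set T}) : (forall x, x \in A -> x \in B -> False) -> [disjoint A & B].
Proof.
move=> H; rewrite -setI_eq0; apply/eqP/setP => x; rewrite !inE.
apply/negP => /andP[h1 h2]; exact: H h1 h2.
Qed.

Lemma Pr_ext {U G G'} : (forall E, E \subset U -> G E = G' E) -> Pr U G = Pr U G'.
Proof.
move=> h; apply: eq_bigr => E; rewrite powersetE => hE; by rewrite h.
Qed.

Lemma PrU U1 U2 G1 G2 F : [disjoint U1 & U2] ->
  (forall E, E \subset U1 :|: U2 -> F E = G1 (E :&: U1) * G2 (E :&: U2)) ->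
  Pr (U1 :|: U2) F = Pr U1 G1 * Pr U2 G2.
Proof.
move=> dis hF.
rewrite (Pr_ext hF) /Pr big_distrlr /= pair_big_dep /=.
rewrite (reindex_onto (fun j : {set T} * {set T} => j.1 :|: j.2)
   (fun E => (E :&: U1, E :&: U2))) /=; last first.
  by move=> E; rewrite powersetE => hE; rewrite -finset.setIUr; apply/finset.setIidPl.
have E12 : forall E1 E2, E1 \subset U1 -> E2 \subset U2 ->
    (E1 :|: E2) :&: U1 = E1 /\ (E1 :|: E2) :&: U2 = E2.
  move=> E1 E2 h1 h2; split.
    rewrite finset.setIUl (finset.setIidPl h1); apply/finset.setUidPl/fintype.subsetP => x; rewrite inE => /andP[h /(disjointFr dis)].
    by move: (fintype.subsetP h2 x h) => ->.
  rewrite finset.setIUl (finset.setIidPl h2); apply/finset.setUidPr/fintype.subsetP => x; rewrite inE => /andP[h /(disjointFl dis)].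
  by move: (fintype.subsetP h1 x h) => ->.
have cond : forall j : {set T} * {set T}, ((j.1 :|: j.2) \in powerset (U1 :|: U2)) &&
    (((j.1 :|: j.2) :&: U1, (j.1 :|: j.2) :&: U2) == j) = (j.1 \in powerset U1) && (j.2 \in powerset U2).
  move=> [E1 E2] /=; rewrite !powersetE.
  apply/idP/idP.
    case/andP=> _ /eqP [<- <-]; by rewrite finset.subsetIr finset.subsetIr.
  case/andP=> h1 h2; rewrite finset.subUset (fintype.subset_trans h1 (finset.subsetUl _ _))
     (fintype.subset_trans h2 (finset.subsetUr _ _)) /=.
  by case: (E12 _ _ h1 h2) => -> ->.
apply: eq_big => [j|[E1 E2]]; first exact: cond.
rewrite cond /= !powersetE => /andP[h1 h2].
case: (E12 _ _ h1 h2) => e1 e2.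
rewrite e1 e2 /wt.
rewrite (eq_bigl [predU U1 & U2]); last by move=> u; rewrite !inE.
rewrite bigU //=.
have -> : \prod_(u in U1) (if u \in E1 :|: E2 then q else 1 - q) = \prod_(u in U1) (if u \in E1 then q else 1 - q).
  apply: eq_bigr => u hu; rewrite inE.
  case: (u \in E2) /idP => [/(fintype.subsetP h2) /(disjointFl dis)|]; last by rewrite orbF.
  by rewrite hu.
have -> : \prod_(u in U2) (if u \in E1 :|: E2 then q else 1 - q) = \prod_(u in U2) (if u \in E2 then q else 1 - q).
  apply: eq_bigr => u hu; rewrite inE.
  case: (u \in E1) /idP => [/(fintype.subsetP h1) /(disjointFr dis)|]; last by [].
  by rewrite hu.
by rewrite -!mulrA; congr (_ * _); rewrite mulrCA.
Qed.
End Prod.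
Arguments Pr {R T} q U G. Arguments wt {R T} q U E.
Section Prod2.
Variables (R : realFieldType) (T : finType) (q : R).
Implicit Types (U E : {set T}).
Local Notation Pr := (@Pr R T q).
Local Notation wt := (@wt R T q).

Lemma Pr0 G : Pr finset.set0 G = G finset.set0.
Proof.
rewrite /Pr powerset0 big_set1 /wt big_pred0; first by rewrite mul1r.
by move=> u; rewrite inE.
Qed.

Lemma Pr1x x G : Pr [set x] G = (1 - q) * G finset.set0 + q * G [set x].
Proof.
rewrite /Pr powerset1 big_setU1 /=; last first.
  rewrite inE; apply/eqP => /setP /(_ x); by rewrite !inE eqxx.
rewrite big_set1 /wt !big_set1 !inE eqxx.
by [].
Qed.

Lemma mem_bigcup_seq (I : Type) (r : seq I) (B : I -> {set T}) x :
  (x \in \bigcup_(i <- r) B i) = has (fun i => x \in B i) r.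
Proof.
elim: r => [|i r IH]; first by rewrite big_nil inE.
by rewrite big_cons inE IH.
Qed.

Lemma Pr_family (I : eqType) (r : seq I) (B : I -> {set T}) (G : I -> {set T} -> R) :
  uniq r -> {in r &, forall i j, i != j -> [disjoint B i & B j]} ->
  Pr (\bigcup_(i <- r) B i) (fun E => \prod_(i <- r) G i (E :&: B i)) =
  \prod_(i <- r) Pr (B i) (G i).
Proof.
elim: r => [|i r IH] /=.
  by move=> _ _; rewrite !big_nil Pr0 big_nil.
case/andP=> ir ur hd.
rewrite big_cons [in RHS]big_cons -IH //; last first.
  by move=> j k jr kr; apply: hd; rewrite inE ?jr ?kr orbT.
apply: PrU.
  apply: disjP => x xi; rewrite mem_bigcup_seq => /hasP[j jr xj].
  have : i != j by apply: contraNneq ir => ->.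
  move/(hd i j); rewrite !inE eqxx jr orbT => /(_ isT isT) dis.
  by move: (disjointFr dis xi); rewrite xj.
move=> E _; rewrite big_cons; congr (_ * _).
rewrite big_seq [in RHS]big_seq; apply: eq_bigr => j jr.
congr (G j _); rewrite -finset.setIA; congr (_ :&: _).
apply/esym/finset.setIidPr/fintype.subsetP => x xj.
rewrite mem_bigcup_seq; apply/hasP; by exists j.
Qed.

Lemma Pr1 U : Pr U (fun=> 1) = 1.
Proof.
have eU : U = \bigcup_(u <- enum U) [set u].
  apply/setP => x; rewrite mem_bigcup_seq; apply/idP/hasP.
    by move=> xU; exists x; rewrite ?mem_enum ?inE.
  by case=> y; rewrite mem_enum inE => yU /eqP ->.
have hd : {in enum U &, forall i j, i != j -> [disjoint [set i] & [set j]]}.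
  move=> i j _ _ ij; apply: disjP => x; rewrite !inE => /eqP -> /eqP; exact/eqP.
have := @Pr_family _ (enum U) (fun u => [set u]) (fun _ _ => 1) (enum_uniq _) hd.
rewrite -eU => h.
transitivity (\prod_(u <- enum U) Pr [set u] (fun _ => 1)).
  rewrite -h; apply: Pr_ext => E _; by rewrite big1.
by rewrite big1 // => u _; rewrite Pr1x; ring.
Qed.

Lemma PrB U G G' : Pr U (fun E => G E - G' E) = Pr U G - Pr U G'.
Proof. rewrite /Pr -sumrB; apply: eq_bigr => E _; by rewrite mulrBr. Qed.

Lemma wt_ge0 U E : 0 <= q <= 1 -> 0 <= wt U E.
Proof.
case/andP=> q0 q1; apply: prodr_ge0 => u _; case: (u \in E) => //.
by rewrite subr_ge0.
Qed.

Lemma Pr_le U G G' : 0 <= q <= 1 -> (forall E, E \subset U -> G E <= G' E) -> Pr U G <= Pr U G'.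
Proof.
move=> hq h; apply: ler_sum => E; rewrite powersetE => hE.
by apply: ler_wpM2l; [exact: wt_ge0|exact: h].
Qed.

Lemma disj11 (x y : T) : x != y -> [disjoint [set x] & [set y]].
Proof. move=> xy; apply: disjP => z; rewrite !inE => /eqP -> /eqP h; by rewrite h eqxx in xy. Qed.

Lemma Pr_both x y : x != y ->
  Pr [set x; y] (fun E => ((x \in E) && (y \in E))%:R) = q * q.
Proof.
move=> xy; rewrite (@PrU _ _ _ _ _ (fun E => (x \in E)%:R) (fun E => (y \in E)%:R)) ?disj11 //.
  by rewrite !Pr1x !inE !eqxx /=; ring.
move=> E _; rewrite !inE !eqxx !andbT.
by case: (x \in E); case: (y \in E); rewrite ?mul1r ?mul0r.
Qed.

Lemma Pr_dom x y : x != y ->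
  Pr [set x; y] (fun E => (~~ ((x \in E) && (y \notin E)))%:R) = 1 - q * (1 - q).
Proof.
move=> xy.
rewrite (@Pr_ext _ _ _ _ _ (fun E => 1 - (x \in E)%:R * (y \notin E)%:R)); last first.
  by move=> E _; case: (x \in E); case: (y \in E); rewrite /= ?mul1r ?mul0r ?subr0 ?subrr.
rewrite PrB Pr1 (@PrU _ _ _ _ _ (fun E => (x \in E)%:R) (fun E => (y \notin E)%:R)) ?disj11 //.
  by rewrite !Pr1x !inE !eqxx /=; ring.
move=> E _; rewrite !inE !eqxx !andbT.
by case: (x \in E); case: (y \in E); rewrite ?mul1r ?mul0r.
Qed.
End Prod2.
Section Graph.
Variable n : nat.
Implicit Types (x y u v : 'I_n) (E : {set 'I_n * 'I_n}).

Definition ep x y : 'I_n * 'I_n := if (x < y)%N then (x, y) else (y, x).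
Definition Uall : {set 'I_n * 'I_n} := [set pr : 'I_n * 'I_n | (pr.1 < pr.2)%N].

Lemma ep_sym x y : ep x y = ep y x.
Proof.
rewrite /ep; case: (ltngtP x y) => h //.
by have -> : x = y by apply: val_inj.
Qed.

Lemma ep_inj x y u v : ep x y = ep u v -> (x = u /\ y = v) \/ (x = v /\ y = u).
Proof.
rewrite /ep; case: (ltnP x y) => _; case: (ltnP u v) => _; move=> [e1 e2]; (left + right); split; congruence.
Qed.

Lemma upperE E : upper E = (E \subset Uall).
Proof.
apply/forall_inP/fintype.subsetP => h pr /h; by rewrite ?inE.
Qed.

Lemma adjE E x y : upper E -> adj E x y = (x != y) && (ep x y \in E).
Proof.
move=> /forall_inP up; rewrite /adj /ep.
case: (ltngtP x y) => h.
- case: ((y, x) \in E) /idP => [/up /= |]; last by rewrite orbF.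
  by rewrite ltnNge (ltnW h).
- case: ((x, y) \in E) /idP => [/up /= |]; last by [].
  by rewrite ltnNge (ltnW h).
- have -> : x = y by apply: val_inj.
  by rewrite eqxx.
Qed.

Lemma ep_up x y : x != y -> ep x y \in Uall.
Proof.
move=> xy; rewrite inE /ep; case: (ltngtP x y) => h /=; rewrite ?h //.
move: xy; have -> : x = y by apply: val_inj.
by rewrite eqxx.
Qed.
End Graph.
Arguments ep {n} x y.
Lemma gnp_Pr (R : realType) n (p : R) (A : pred {set 'I_n * 'I_n}) :
  gnp_prob p A = Pr p (Uall n) (fun E => (A E)%:R).
Proof.
rewrite /gnp_prob /Pr big_mkcond [RHS]big_mkcond; apply: eq_bigr => E _.
rewrite /gnp_weight upperE powersetE.
case: (E \subset Uall n) => /=; case: (A E) => //=; rewrite ?mulr1 ?mulr0 //.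
by apply: eq_bigl => pr; rewrite inE.
Qed.
Section Bound.
Variables (R : realType) (n : nat) (p : R) (a b c d : 'I_n).
Hypothesis hp : 0 <= p <= 1.
Hypothesis hu : uniq [:: a; b; c; d].
Implicit Types (z : 'I_n) (E : {set 'I_n * 'I_n}).

Definition Bz z : {set 'I_n * 'I_n} :=
  if (z == a) || (z == c) then finset.set0 else [set ep z c; ep z a].
Definition gb z E : bool :=
  if (z == a) || (z == c) then true
  else if (z == b) || (z == d) then (ep z c \in E) && (ep z a \in E)
  else ~~ ((ep z c \in E) && (ep z a \notin E)).
Definition Gz z E : R := (gb z E)%:R.

Let dist : [/\ a != b, a != c, a != d & [/\ b != c, b != d & c != d]].
Proof.
move: hu; rewrite /= !inE !negb_or.
by case/and4P => /and3P[-> -> ->] /andP[-> ->] ->.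
Qed.

Lemma Bz_disj : {in enum 'I_n &, forall z z', z != z' -> [disjoint Bz z & Bz z']}.
Proof.
move=> z z' _ _ zz'; apply: disjP => w; rewrite /Bz.
case: ifP => hz; first by rewrite inE.
case: ifP => hz'; first by move=> _; rewrite inE.
rewrite !inE => /orP[/eqP -> | /eqP ->] /orP[/eqP | /eqP] /ep_inj [[e1 e2]|[e1 e2]];
  first [by rewrite e1 eqxx in zz' | by rewrite e1 eqxx ?orbT in hz].
Qed.

Lemma Bz_sub z : Bz z \subset Uall n.
Proof.
rewrite /Bz; case: ifP => hz; first exact: finset.sub0set.
move: hz => /negbT; rewrite negb_or => /andP[za zc].
by rewrite finset.subUset !finset.sub1set !ep_up.
Qed.

Lemma gb_dd E z : E \subset Uall n -> is_domination_diamond E a b c d -> gb z (E :&: Bz z).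
Proof.
rewrite -upperE => hE.
case/and5P => _ hab hbc hcd /and4P[hda _ _ hdom].
rewrite /gb; case: ifP => // hz.
have hBc : ep z c \in Bz z by rewrite /Bz hz !inE eqxx.
have hBa : ep z a \in Bz z by rewrite /Bz hz !inE eqxx orbT.
rewrite !finset.in_setI hBc hBa !andbT.
move: hz => /negbT; rewrite negb_or => /andP[za zc].
rewrite !(adjE _ _ _ _ hE) in hab hbc hcd hda.
case: ifP => hbd.
  case/orP: hbd => /eqP ->.
    case/andP: hbc => _ h1; case/andP: hab => _ h2; by rewrite h1 ep_sym h2.
  case/andP: hda => _ h1; case/andP: hcd => _ h2; by rewrite ep_sym h2 h1.
case: (ep z c \in E) /idP => hzc //=; rewrite negbK.
have cz : c != z by rewrite eq_sym.
move/forallP: hdom => /(_ z) /implyP.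
rewrite (adjE _ _ _ _ hE) (adjE _ _ _ _ hE) cz ep_sym hzc => /(_ isT) /orP [/andP [_ h]|].
  by rewrite ep_sym.
by rewrite (negbTE za).
Qed.
Lemma PrBz z : Pr p (Bz z) (Gz z) =
  if (z == a) || (z == c) then 1 else if (z == b) || (z == d) then p * p else 1 - p * (1 - p).
Proof.
case: dist => hab hac had [hbc hbd hcd].
rewrite /Bz /Gz /gb; case: ifP => hz; first by rewrite Pr0.
have hne : ep z c != ep z a.
  apply/negP => /eqP /ep_inj [[_ e]|[e _]].
    by rewrite e eqxx in hac.
  by rewrite e eqxx in hz.
have [h|h] := boolP ((z == b) || (z == d)).
  by rewrite Pr_both.
by rewrite Pr_dom.
Qed.

Lemma prod_Pr : \prod_(z <- enum 'I_n) Pr p (Bz z) (Gz z) = p ^+ 4 * (1 - p * (1 - p)) ^+ (n - 4).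
Proof.
case: dist => hab hac had [hbc hbd hcd].
rewrite (eq_bigr _ (fun z _ => PrBz z)).
rewrite big_enum /= (bigID (fun z => z \in [:: a; b; c; d])) /=.
have -> : \prod_(i in 'I_n | i \in [:: a; b; c; d])
     (if (i == a) || (i == c)
      then 1
      else if (i == b) || (i == d) then p * p else (1 - p * (1 - p) : R)) = p ^+ 4.
  rewrite (eq_bigl (fun i => i \in [:: a; b; c; d])) // -big_uniq //.
  rewrite !big_cons big_nil !eqxx /= orbT.
  rewrite (eq_sym b a) (negbTE hab) (negbTE hbc) (eq_sym d a) (negbTE had) (eq_sym d c) (negbTE hcd) /=.
  by rewrite orbT; ring.
congr (_ * _).
rewrite (eq_bigr (fun _ => 1 - p * (1 - p))); last first.
  move=> i; rewrite !inE !negb_or => /and4P[ia ib ic id].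
  by rewrite (negbTE ia) (negbTE ib) (negbTE ic) (negbTE id).
rewrite (eq_bigl (fun i => i \in [predC [:: a; b; c; d]])); last by move=> i; rewrite !inE.
rewrite prodr_const; congr (_ ^+ _).
have := cardC [pred i | i \in [:: a; b; c; d]].
rewrite card_ord.
have e1 : #|[pred i in [:: a; b; c; d]]| = 4%N.
  move/card_uniqP: hu => /= <-; by apply: eq_card => i.
have e2 : #|[predC [pred i in [:: a; b; c; d]]]| = #|[predC [:: a; b; c; d]]|.
  by apply: eq_card => i; rewrite !inE.
rewrite e1 e2 => h; lia.
Qed.
Lemma dd_bound_u : gnp_prob p (fun E => is_domination_diamond E a b c d) <=
  p ^+ 4 * (1 - p * (1 - p)) ^+ (n - 4).
Proof.
rewrite gnp_Pr.
set C := \bigcup_(z <- enum 'I_n) Bz z.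
have hBC : forall z, Bz z \subset C.
  move=> z; apply/fintype.subsetP => w wz; rewrite /C mem_bigcup_seq; apply/hasP.
  by exists z; rewrite ?mem_enum.
have hC : C \subset Uall n.
  apply/fintype.subsetP => w; rewrite /C mem_bigcup_seq => /hasP[z _ wz].
  exact: (fintype.subsetP (Bz_sub z)).
apply: le_trans (@Pr_le _ _ _ _ _ (fun E => \prod_(z <- enum 'I_n) Gz z (E :&: Bz z)) hp _) _.
  move=> E hE; case h: (is_domination_diamond E a b c d) => /=.
    by rewrite big1 // => z _; rewrite /Gz gb_dd.
  by apply: prodr_ge0 => z _; exact: ler0n.
rewrite -(setID (Uall n) C) (finset.setIidPr hC).
rewrite (@PrU _ _ _ _ _ (fun E => \prod_(z <- enum 'I_n) Gz z (E :&: Bz z)) (fun _ => 1)).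
- rewrite Pr1 mulr1 /C Pr_family ?enum_uniq ?prod_Pr //; exact: Bz_disj.
- by apply: disjP => w wC; rewrite !inE wC.
- move=> E _; rewrite mulr1 big_seq [RHS]big_seq; apply: eq_bigr => z _.
  by rewrite -finset.setIA (finset.setIidPr (hBC z)).
Qed.
End Bound.

Lemma dd_bound (R : realType) n (p : R) (a b c d : 'I_n) : 0 <= p <= 1 ->
  gnp_prob p (fun E => is_domination_diamond E a b c d) <=
  p ^+ 4 * (1 - p * (1 - p)) ^+ (n - 4).
Proof.
move=> hp.
have [hu|hu] := boolP (uniq [:: a; b; c; d]); first exact: dd_bound_u.
rewrite /gnp_prob big_pred0; last by move=> E; rewrite /is_domination_diamond (negbTE hu).
case/andP: hp => p0 p1.
apply: mulr_ge0; first exact: exprn_ge0.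
apply: exprn_ge0; nra.
Qed.
Lemma gnp_weight_ge0 (R : realType) n (p : R) (E : {set 'I_n * 'I_n}) : 0 <= p <= 1 -> 0 <= gnp_weight p E.
Proof.
case/andP=> p0 p1; rewrite /gnp_weight; case: ifP => // _.
apply: prodr_ge0 => pr _; case: ifP => // _; by rewrite subr_ge0.
Qed.

Lemma union_bound (R : realType) n (p : R) : 0 <= p <= 1 ->
  gnp_prob p (fun E : {set 'I_n * 'I_n} => has_domination_diamond E) <=
  (n ^ 4)%:R * (p ^+ 4 * (1 - p * (1 - p)) ^+ (n - 4)).
Proof.
move=> hp.
pose F (q : 'I_n * 'I_n * 'I_n * 'I_n) := gnp_prob p (fun E => is_domination_diamond E q.1.1.1 q.1.1.2 q.1.2 q.2).
apply: (@le_trans _ _ (\sum_(q : 'I_n * 'I_n * 'I_n * 'I_n) F q)).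
  rewrite /F /gnp_prob big_mkcond /=.
  under [X in _ <= X]eq_bigr do rewrite big_mkcond.
  rewrite [X in _ <= X]exchange_big /=; apply: ler_sum => E _.
  case: ifP => hE; last by apply: sumr_ge0 => q _; case: ifP => // _; exact: gnp_weight_ge0.
  case/existsP: hE => a /existsP[b /existsP[c /existsP[d h]]].
  rewrite (bigD1 (a, b, c, d)) //= h lerDl.
  by apply: sumr_ge0 => q _; case: ifP => // _; exact: gnp_weight_ge0.
have H : \sum_(q : 'I_n * 'I_n * 'I_n * 'I_n) F q <=
    \sum_(q : 'I_n * 'I_n * 'I_n * 'I_n) (p ^+ 4 * (1 - p * (1 - p)) ^+ (n - 4)).
  by apply: ler_sum => q _; exact: dd_bound.
apply: le_trans H _.
rewrite sumr_const !card_prod card_ord -mulr_natl.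
have -> : (n * n * n * n = n ^ 4)%N by rewrite !expnS expn0 muln1 !mulnA.
by rewrite mulr1 mulr_natl.
Qed.
Lemma key (R : realType) n (p : R) : 0 < p -> p <= 1/2 -> (8 <= n)%N ->
  (n ^ 4)%:R * (p ^+ 4 * (1 - p * (1 - p)) ^+ (n - 4)) <= 20 ^+ 5 / (n%:R * p).
Proof.
move=> p0 p12 n8.
set x := n%:R * p.
have n0 : (0 : R) < n%:R by rewrite ltr0n; lia.
have x0 : 0 < x by rewrite /x mulr_gt0.
have h1 : 1 - p * (1 - p) <= expR (- (p / 2)).
  apply: (le_trans _ (expR_ge1Dx _)); nra.
have h1' : 0 <= 1 - p * (1 - p) by nra.
have h2 : (1 - p * (1 - p)) ^+ (n - 4) <= expR (- (x / 4)).
  apply: le_trans (lerXn2r _ _ _ h1) _; rewrite ?nnegrE ?expR_ge0 //.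
  rewrite -expRM_natl ler_expR natrB; last lia.
  have : (n%:R : R) >= 8 by rewrite (ler_nat R 8 n).
  rewrite /x; nra.
have h3 : (x / 20) ^+ 5 <= expR (x / 4).
  have -> : x / 4 = 5%:R * (x / 20) by field.
  rewrite expRM_natl; apply: lerXn2r.
  - by rewrite nnegrE divr_ge0 // ltW.
  - by rewrite nnegrE expR_ge0.
  - apply: (le_trans _ (expR_ge1Dx _)); lra.
have e4 : (n ^ 4)%:R * p ^+ 4 = x ^+ 4 by rewrite natrX /x exprMn.
rewrite mulrA e4.
apply: le_trans (ler_wpM2l (exprn_ge0 _ (ltW x0)) h2) _.
rewrite expRN.
have E0 : 0 < expR (x / 4) by exact: expR_gt0.
have -> : x ^+ 4 * (expR (x / 4))^-1 = x ^+ 5 * (x * expR (x / 4))^-1.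
  field; rewrite ?gt_eqF //.
have -> : 20 ^+ 5 / x = (20 ^+ 5 * expR (x / 4)) * (x * expR (x / 4))^-1.
  field; rewrite ?gt_eqF //.
apply: ler_wpM2r; first by rewrite invr_ge0 ltW // mulr_gt0.
have : (x / 20) ^+ 5 = x ^+ 5 / 20 ^+ 5 by rewrite exprMn exprVn.
move=> e; rewrite e in h3.
rewrite -ler_pdivrMl ?exprn_gt0 //; by rewrite mulrC.
Qed.
Local Open Scope classical_set_scope.
Local Open Scope ring_scope.

Theorem proposition2p12 (R : realType) (p : nat -> R)
  (hp01 : forall n, 0 <= p n <= 1)
  (hp0 : p @ \oo --> 0)
  (hnp : (fun n => n%:R * p n) @ \oo --> +oo) :
  (fun n => gnp_prob (p n) (fun E : {set 'I_n * 'I_n} => has_domination_diamond E))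
    @ \oo --> 0.
Proof.
apply/cvgrPdist_le => e e0.
have hA : \forall n \near \oo, 20 ^+ 5 / e <= n%:R * p n.
  by move/cvgryPge: hnp; apply.
have hB : \forall n \near \oo, `|0 - p n| <= 1/2.
  move/cvgrPdist_le: hp0 => /(_ (1/2)); apply; by rewrite divr_gt0.
near=> n.
have g0 : 0 <= gnp_prob (p n) (fun E : {set 'I_n * 'I_n} => has_domination_diamond E).
  by apply: sumr_ge0 => E _; apply: gnp_weight_ge0.
rewrite sub0r normrN ger0_norm //.
have n8 : (8 <= n)%N by near: n; exact: nbhs_infty_ge.
have hx : 20 ^+ 5 / e <= n%:R * p n by near: n; exact: hA.
have hp12 : `|0 - p n| <= 1/2 by near: n; exact: hB.
have /andP[pn0 pn1] := hp01 n.
have c0 : 0 < 20 ^+ 5 / e :> R by rewrite divr_gt0 // exprn_gt0.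
have nn0 : (0 : R) <= n%:R by exact: ler0n.
have x0 : 0 < n%:R * p n by exact: lt_le_trans c0 hx.
have p0 : 0 < p n by nra.
have p12 : p n <= 1/2.
  by move: hp12; rewrite sub0r normrN ger0_norm.
apply: le_trans (@union_bound R n (p n) (hp01 n)) _.
apply: le_trans (@key R n (p n) p0 p12 n8) _.
rewrite ler_pdivrMr //.
by move: hx; rewrite ler_pdivrMr // mulrC.
Unshelve. all: by end_near.
Qed.
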